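(* The complete tripartite graph $K_{2,2,4}$ is chromatic-choosable, but it is not weakly enumeratively chromatic-choosable.
   Context: A graph $G$ is chromatic-choosable if its list chromatic number equals its chromatic number. For a list assignment $L$, $P(G,L)$ is the number of proper $L$-colorings; $P(G,m)$ is the chromatic polynomial, and the list color function $P_\ell(G,m)$ is the minimum of $P(G,L)$ over all assignments $L$ of lists of size $m$. $G$ is weakly enumeratively chromatic-choosable if $P_\ell(G,\chi(G))=P(G,\chi(G))$. *)

(* Defs.v *)
From mathcomp Require Import all_boot all_order.
Set Implicit Arguments. Unset Strict Implicit. Unset Printing Implicit Defensive.

Section Coloring.
Variables (T : finType) (e : rel T).

Definition proper (C : Type) (f : T -> C) : Prop :=
  forall u v, e u v -> f u <> f v.

Definition colorable (k : nat) : Prop :=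
  exists f : {ffun T -> 'I_k}, proper f.

Definition is_chromatic_number (k : nat) : Prop :=
  colorable k /\ forall j, j < k -> ~ colorable j.

(* A list assignment: L v is a finite list (set) of colors, colors drawn from
   the naturals below some bound N (every finite family of finite lists of
   natural-number colors fits into some 'I_N). *)
Definition list_of_size (N : nat) (L : T -> {set 'I_N}) (m : nat) : Prop :=
  forall v, #|L v| = m.

Definition Lcoloring (N : nat) (L : T -> {set 'I_N}) (f : {ffun T -> 'I_N}) :=
  (forall v, f v \in L v) /\ proper f.

Definition choosable (k : nat) : Prop :=
  forall N (L : T -> {set 'I_N}), @list_of_size N L k ->
    exists f, Lcoloring L f.

Definition is_list_chromatic_number (k : nat) : Prop :=
  choosable k /\ forall j, j < k -> ~ choosable j.

Definition chromatic_choosable : Prop :=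
  exists k, is_chromatic_number k /\ is_list_chromatic_number k.

Definition PL (N : nat) (L : T -> {set 'I_N}) : nat :=
  #|[set f : {ffun T -> 'I_N} | [forall v, f v \in L v] &&
                                 [forall u, forall v, e u v ==> (f u != f v)]]|.

Definition chrom_poly (m : nat) : nat :=
  #|[set f : {ffun T -> 'I_m} | [forall u, forall v, e u v ==> (f u != f v)]]|.

Definition is_list_color_fun_value (m p : nat) : Prop :=
  (exists N (L : T -> {set 'I_N}), @list_of_size N L m /\ PL L = p) /\
  (forall N (L : T -> {set 'I_N}), @list_of_size N L m -> p <= PL L).

Definition weakly_enum_chromatic_choosable : Prop :=
  forall k, is_chromatic_number k -> is_list_color_fun_value k (chrom_poly k).

End Coloring.

Definition part224 (v : 'I_8) : nat := if v < 2 then 0 else if v < 4 then 1 else 2.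
Definition K224 : rel 'I_8 := fun u v => part224 u != part224 v.

(* Main.v *)
Require Import Defs.
From mathcomp Require Import all_boot all_order.
Set Implicit Arguments. Unset Strict Implicit. Unset Printing Implicit Defensive.

Fixpoint memn (x : nat) (s : seq nat) : bool :=
  match s with [::] => false | y :: s' => eqn x y || memn x s' end.
Fixpoint subn_ (T S : seq nat) : bool :=
  match T with [::] => true | t :: T' => memn t S && subn_ T' S end.
Fixpoint udp (s : seq nat) : seq nat :=
  match s with [::] => [::] | x :: s' => if memn x s' then udp s' else x :: udp s' end.
Fixpoint remn (x : nat) (s : seq nat) : seq nat :=
  match s with [::] => [::] | y :: s' => if eqn x y then s' else y :: remn x s' end.
Definition branches (s : seq nat) : seq (seq nat) :=
  match s with [:: _; _; _] => [:: s] | _ => [seq remn x s | x <- s] end.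
Fixpoint good k (F : seq (seq nat)) : bool :=
  match k with
  | 0 => match F with [::] => false | _ => true end
  | k'.+1 => match F with
    | [::] => false
    | S0 :: _ =>
       match udp S0 with
       | [:: _, _, _ & _] =>
         all (fun T => good k' [seq S <- F | ~~ subn_ T S]) (branches (udp S0))
       | _ => true end
    end
  end.

Lemma memnE x s : memn x s = (x \in s).
Proof. by elim: s => //= y s ->; rewrite in_cons. Qed.
Lemma subnE T S : subn_ T S = all (fun t => t \in S) T.
Proof. by elim: T => //= t T ->; rewrite memnE. Qed.
Lemma udpE s : udp s = undup s.
Proof. by elim: s => //= x s ->; rewrite memnE. Qed.
Lemma remnE x s : remn x s = rem x s.
Proof. by elim: s => //= y s ->; rewrite eq_sym. Qed.

Lemma branch_ok (s T : seq nat) : uniq s -> 3 <= size s <= 4 -> uniq T -> size T = 3 ->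
  all (fun t => t \in s) T -> exists2 B, B \in branches s & T =i B.
Proof.
move=> us /andP[s3 s4] uT sT /allP Ts.
have Hb : forall B, uniq B -> size B = 3 -> {subset T <= B} -> T =i B.
  move=> B uB sB TB; have [] := uniq_min_size uT TB; first by rewrite sT sB.
  by [].
case: s us s3 s4 Ts => [|a [|b [|c [|d [|e r]]]]] //= us _ _ Ts.
  by exists [:: a; b; c]; rewrite ?inE ?eqxx //; apply: Hb.
have [x xs xT] : exists2 x, x \in [:: a; b; c; d] & x \notin T.
  apply/hasP; apply: contraT; rewrite -all_predC => /allP H.
  have : size [:: a; b; c; d] <= size T.
    apply: uniq_leq_size => // y ys; have := H y ys; by rewrite /= negbK.
  by rewrite sT.
exists (rem x [:: a; b; c; d]).
  rewrite -remnE.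
  change (remn x [:: a; b; c; d] \in map (fun y => remn y [:: a; b; c; d]) [:: a; b; c; d]).
  by apply/mapP; exists x.
apply: Hb; first by rewrite rem_uniq.
  by rewrite size_rem.
move=> t tT; rewrite mem_rem_uniq // inE Ts // andbT.
by apply: contraNneq xT => <-.
Qed.

Lemma good_sound k F : good k F -> all (fun S => size S <= 4) F ->
  forall Ts, size Ts <= k -> (forall T, T \in Ts -> uniq T /\ size T = 3) ->
  exists2 S, S \in F & forall T, T \in Ts -> ~~ subn_ T S.
Proof.
elim: k F => [|k IH] [|S0 F] //.
  by move=> _ _ [|] // _ _; exists S0; rewrite ?inE ?eqxx.
move=> /= Hg /andP[HS0 HF] Ts HTs HT.
have cov : forall T, T \in Ts -> subn_ T S0 -> 3 <= size (udp S0) /\ exists2 B, B \in branches (udp S0) & T =i B.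
  move=> T TTs; rewrite subnE => TS0; have [uT sT] := HT T TTs.
  have sub : all (fun t => t \in udp S0) T.
    by apply/allP => t tT; rewrite udpE mem_undup; exact: (allP TS0).
  have s3 : 3 <= size (udp S0).
    by rewrite -sT; apply: uniq_leq_size => // t tT; exact: (allP sub).
  split => //; apply: branch_ok => //; first by rewrite udpE undup_uniq.
  rewrite s3 /= (leq_trans _ HS0) // udpE; exact: size_undup.
case: (boolP (has (fun T => subn_ T S0) Ts)) => [/hasP [T TTs TS0] | Hn]; last first.
  exists S0; first by rewrite inE eqxx.
  by move=> T TTs; apply: contraNN Hn => H; apply/hasP; exists T.
have [s3 [B Bb TB]] := cov T TTs TS0.
move: Hg; case Hu: (udp S0) s3 Bb => [|a [|b [|c r]]] //= _ Bb.
rewrite -Hu => /allP /(_ B); rewrite Hu => /(_ Bb) Hg0.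
have Hg : good k [seq S <- S0 :: F | ~~ subn_ B S] by [].
have [|||S SF HS] := IH _ Hg _ [seq T' <- Ts | T' != T].
- apply/allP => S; rewrite mem_filter => /andP[_ ]; rewrite inE => /orP[/eqP->//|].
  by move/(allP HF).
- rewrite size_filter -ltnS (leq_trans _ HTs) //.
  rewrite -[X in _ < X](count_predC (fun T' => T' != T)) -addn1 leq_add2l.
  rewrite -has_count; apply/hasP; exists T => //=; by rewrite negbK.
- by move=> T' ; rewrite mem_filter => /andP[_ /HT].
exists S; first by move: SF; rewrite mem_filter => /andP[].
move=> T' T'Ts; case: (eqVneq T' T) => [->|ne].
  move: SF; rewrite mem_filter => /andP[+ _].
  by rewrite !subnE (eq_all_r TB).
by apply: HS; rewrite mem_filter ne.
Qed.

Definition configs (x1 x2 y1 y2 : seq nat) : seq (seq nat) :=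
  flatten (map (fun a => flatten (map (fun b => flatten (map (fun c =>
    flatten (map (fun d => if ~~ eqn a c && ~~ eqn a d && ~~ eqn b c && ~~ eqn b d
                           then [:: [:: a; b; c; d]] else [::]) y2)) y1)) x2)) x1).
Fixpoint subs (j : nat) (s : seq nat) : seq (seq nat) :=
  match j, s with
  | 0, _ => [:: [::]]
  | j'.+1, [::] => [::]
  | j'.+1, x :: s' => map (cons x) (subs j' s') ++ subs j s'
  end.
Definition canon (m : nat) : seq (seq nat * nat) :=
  flatten (map (fun j => map (fun o => (o ++ iota m (3 - j), m + (3 - j))) (subs j (iota 0 m))) (iota 0 4)).
Definition small (S : seq nat) := match udp S with [:: _, _, _ & _] => false | _ => true end.
Definition good' F := has small F || good 4 F.
Definition check_all :=
  all (fun p1 => all (fun p2 => all (fun p3 => all (fun p4 =>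
     good' (configs p1.1 p2.1 p3.1 p4.1)) (canon p3.2)) (canon p2.2)) (canon p1.2)) (canon 0).

Lemma configs_spec x1 x2 y1 y2 S : S \in configs x1 x2 y1 y2 ->
  exists a b c d, [/\ S = [:: a; b; c; d], a \in x1, b \in x2, c \in y1 &
                   [/\ d \in y2, a != c, a != d, b != c & b != d]].
Proof.
case/flatten_mapP => a ax /flatten_mapP [b bx /flatten_mapP [c cy /flatten_mapP [d dy]]].
case: ifP => // /andP[/andP[/andP[ac ad] bc] bd]; rewrite inE => /eqP ->.
by exists a, b, c, d; split => //; split => //; apply/eqP => E; rewrite E eqnE eqxx in ac ad bc bd.
Qed.

Lemma configs_size x1 x2 y1 y2 : all (fun S => size S <= 4) (configs x1 x2 y1 y2).
Proof.
apply/allP => S /configs_spec [a [b [c [d [-> _]]]]] //.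
Qed.

Lemma subs_filter (P : pred nat) t : [seq x <- t | P x] \in subs (count P t) t.
Proof.
elim: t => [|x t IH] /=; first by case: (count P [::]).
case: (P x) => /=.
  by rewrite add1n mem_cat; apply/orP; left; apply: map_f.
rewrite add0n. move: IH. case: (count P t) => [|n] IH /=.
  by case: t IH.
by rewrite mem_cat IH orbT.
Qed.

Lemma check_allT : check_all.
Proof. vm_cast_no_check (erefl true). Qed.

Lemma nat_main p1 p2 p3 p4 : p1 \in canon 0 -> p2 \in canon p1.2 -> p3 \in canon p2.2 ->
  p4 \in canon p3.2 -> forall Ts, size Ts <= 4 -> (forall T, T \in Ts -> uniq T /\ size T = 3) ->
  exists a b c d, [/\ a \in p1.1, b \in p2.1, c \in p3.1 &
                   [/\ d \in p4.1, a != c, a != d, b != c & b != d]] /\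
                  forall T, T \in Ts -> ~~ subn_ T [:: a; b; c; d].
Proof.
move=> H1 H2 H3 H4 Ts HTs HT.
have := check_allT; rewrite /check_all => /allP /(_ _ H1) /allP /(_ _ H2) /allP /(_ _ H3)
  /allP /(_ _ H4).
set F := configs _ _ _ _ => HG.
have key : exists2 S, S \in F & forall T, T \in Ts -> ~~ subn_ T S.
  case/orP: HG => [/hasP [S SF Ss] | Hg]; last exact: good_sound Hg (configs_size _ _ _ _) _ HTs HT.
  exists S => // T TT; apply/negP; rewrite subnE => /allP TS.
  have [uT sT] := HT T TT.
  have : size T <= size (udp S).
    apply: uniq_leq_size => // t tT; rewrite udpE mem_undup; exact: TS.
  by move: Ss; rewrite /small sT; case: (udp S) => [|? [|? [|? ?]]].
case: key => S /configs_spec [a [b [c [d [-> ? ? ? [? ? ? ? ?]]]]]] HS.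
by exists a, b, c, d.
Qed.

Definition step (T : eqType) (acc e : seq T) := acc ++ [seq y <- e | y \notin acc].

Lemma step_canon (T : eqType) (x0 : T) (acc e : seq T) : uniq acc -> uniq e -> size e = 3 ->
  exists2 pr, pr \in canon (size acc) &
    pr.2 = size (step acc e) /\ [seq index y (step acc e) | y <- e] =i pr.1.
Proof.
move=> uacc ue se.
set ol := [seq y <- e | y \in acc]; set nw := [seq y <- e | y \notin acc].
set oi := [seq index y acc | y <- ol].
have uoi : uniq oi.
  rewrite map_inj_in_uniq ?filter_uniq // => y z.
  rewrite !mem_filter => /andP[ya _] /andP[za _]; exact: index_inj.
have oilt : forall i, i \in oi -> i < size acc.
  move=> i /mapP [y]; rewrite mem_filter => /andP[ya _] ->; by rewrite index_mem.
set o := [seq i <- iota 0 (size acc) | i \in oi].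
set j := count (mem oi) (iota 0 (size acc)).
have oE : o =i oi.
  move=> i; rewrite mem_filter mem_iota /= add0n.
  by apply/andP/idP => [[]//|H]; split => //; exact: oilt.
have jE : j = size ol.
  rewrite /j -size_filter -/o (perm_size (uniq_perm _ uoi oE)) ?size_map //.
  exact: filter_uniq (iota_uniq _ _).
have snw : size nw = 3 - j.
  by rewrite jE -se /ol /nw !size_filter -(count_predC (mem acc) e) addKn.
have unw : uniq nw by exact: filter_uniq.
exists (o ++ iota (size acc) (3 - j), size acc + (3 - j)).
  apply/flatten_mapP; exists j.
    by rewrite mem_iota /= add0n ltnS jE -se size_filter count_size.
  by apply: (map_f (fun o => (o ++ iota (size acc) (3 - j), size acc + (3 - j)))); exact: subs_filter.
split; first by rewrite /step size_cat snw.
move=> z; apply/mapP/idP.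
  case=> y ye ->; rewrite /step index_cat mem_cat.
  case: ifP => ya.
    apply/orP; left; rewrite oE; apply: map_f; by rewrite mem_filter ya.
  apply/orP; right; rewrite mem_iota leq_addr /= ltn_add2l -snw index_mem.
  by rewrite mem_filter ya.
rewrite mem_cat => /orP[|].
  rewrite oE => /mapP [y]; rewrite mem_filter => /andP[ya ye] ->.
  by exists y => //; rewrite /step index_cat ya.
rewrite mem_iota => /andP[z1 z2].
have iz : z - size acc < size nw by rewrite snw ltn_subLR.
exists (nth x0 nw (z - size acc)).
  by have := mem_nth x0 iz; rewrite mem_filter => /andP[].
have := mem_nth x0 iz; rewrite mem_filter => /andP[na _].
by rewrite /step index_cat (negPf na) index_uniq // subnKC.
Qed.

Lemma step_uniq (T : eqType) (acc e : seq T) : uniq acc -> uniq e -> uniq (step acc e).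
Proof.
move=> ua ue; rewrite /step cat_uniq ua filter_uniq // andbT /=.
by apply/hasPn => y; rewrite mem_filter => /andP[].
Qed.
Lemma mem_step_l (T : eqType) (acc e : seq T) y : y \in acc -> y \in step acc e.
Proof. by rewrite /step mem_cat => ->. Qed.
Lemma mem_step_r (T : eqType) (acc e : seq T) y : y \in e -> y \in step acc e.
Proof. by rewrite /step mem_cat mem_filter => ->; case: (y \in acc). Qed.
Lemma index_step (T : eqType) (acc e : seq T) y : y \in acc -> index y (step acc e) = index y acc.
Proof. by rewrite /step index_cat => ->. Qed.

Lemma choosable3 : choosable K224 3.
Proof.
move=> N L HL.
pose e (i : nat) := enum (L (inord i)).
have ue : forall i, uniq (e i) by move=> i; exact: enum_uniq.
have se : forall i, size (e i) = 3 by move=> i; rewrite -cardE HL.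
have [x0 _] : exists x, x \in e 0.
  by case: (e 0) (se 0) => [|x ?] // _; exists x; rewrite inE eqxx.
pose A1 := step [::] (e 0); pose A2 := step A1 (e 1); pose A3 := step A2 (e 2);
pose A4 := step A3 (e 3).
pose s := step (step (step (step A4 (e 4)) (e 5)) (e 6)) (e 7).
have uA1 : uniq A1 by exact: step_uniq.
have uA2 : uniq A2 by exact: step_uniq.
have uA3 : uniq A3 by exact: step_uniq.
have uA4 : uniq A4 by exact: step_uniq.
have us : uniq s by rewrite /s; do 4 apply: step_uniq => //.
pose h y := index y s.
have sub4 : forall y, y \in A4 -> y \in s /\ h y = index y A4.
  move=> y yA.
  have m1 := mem_step_l (e 4) yA; have m2 := mem_step_l (e 5) m1.
  have m3 := mem_step_l (e 6) m2; have m4 := mem_step_l (e 7) m3.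
  by split => //; rewrite /h /s (index_step _ m3) (index_step _ m2) (index_step _ m1) (index_step _ yA).
have sub3 : forall y, y \in A3 -> h y = index y A3.
  by move=> y yA; have [_ ->] := sub4 y (mem_step_l _ yA); rewrite index_step.
have sub2 : forall y, y \in A2 -> h y = index y A2.
  by move=> y yA; rewrite (sub3 _ (mem_step_l _ yA)) index_step.
have sub1 : forall y, y \in A1 -> h y = index y A1.
  by move=> y yA; rewrite (sub2 _ (mem_step_l _ yA)) index_step.
have [p1 P1 [E1 M1]] := @step_canon _ x0 [::] (e 0) isT (ue 0) (se 0).
have [p2 P2 [E2 M2]] := step_canon x0 uA1 (ue 1) (se 1).
have [p3 P3 [E3 M3]] := step_canon x0 uA2 (ue 2) (se 2).
have [p4 P4 [E4 M4]] := step_canon x0 uA3 (ue 3) (se 3).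
have es : forall i, 4 <= i < 8 -> {subset e i <= s}.
  move=> i /andP[]; rewrite leq_eqVlt => /orP[/eqP <-|]; first by move=> _ y ?; rewrite /s; do 3 apply: mem_step_l; exact: mem_step_r.
  rewrite leq_eqVlt => /orP[/eqP <-|]; first by move=> _ y ?; rewrite /s; do 2 apply: mem_step_l; exact: mem_step_r.
  rewrite leq_eqVlt => /orP[/eqP <-|]; first by move=> _ y ?; rewrite /s; do 1 apply: mem_step_l; exact: mem_step_r.
  rewrite leq_eqVlt => /orP[/eqP <-|]; first by move=> _ y ?; rewrite /s; exact: mem_step_r.
  by rewrite ltnNge => /negP.
have uh : forall i, 4 <= i < 8 -> uniq (map h (e i)) /\ size (map h (e i)) = 3.
  move=> i Hi; rewrite size_map se map_inj_in_uniq ?ue //.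
  move=> y z /(es i Hi) ys /(es i Hi) zs; exact: index_inj.
have eL : forall i v, i < 8 -> v \in e i -> v \in L (inord i) by move=> i v _; rewrite mem_enum.
move: E1 M1 E2 M2 E3 M3 E4 M4.
rewrite -/A1 -/A2 -/A3 -/A4 => E1 M1 E2 M2 E3 M3 E4 M4.
have eA1 : {subset e 0 <= A1} by move=> y; exact: mem_step_r.
have eA2 : {subset e 1 <= A2} by move=> y; exact: mem_step_r.
have eA3 : {subset e 2 <= A3} by move=> y; exact: mem_step_r.
have eA4 : {subset e 3 <= A4} by move=> y; exact: mem_step_r.
clearbody h s A4 A3 A2 A1 e.
have P2' : p2 \in canon p1.2 by rewrite E1.
have P3' : p3 \in canon p2.2 by rewrite E2.
have P4' : p4 \in canon p3.2 by rewrite E3.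
have [a [b [c [d [[Ha Hb Hc [Hd ac ad bc bd]] HT]]]]] :=
  @nat_main p1 p2 p3 p4 P1 P2' P3' P4' [:: map h (e 4); map h (e 5); map h (e 6); map h (e 7)] isT
  (fun T TT => ltac:(by move: TT; rewrite !inE => /or4P [] /eqP ->; apply: uh)).
have pull : forall (l : seq 'I_N) S, ~~ subn_ (map h l) S -> exists2 g, g \in l & h g \notin S.
  move=> l S; rewrite subnE all_map => /allPn [g gl gS]; by exists g.
have [g4 g4e g4S] := pull _ _ (HT _ (mem_head _ _)).
have [g5 g5e g5S] := pull _ _ (HT (map h (e 5)) ltac:(by rewrite !inE eqxx ?orbT)).
have [g6 g6e g6S] := pull _ _ (HT (map h (e 6)) ltac:(by rewrite !inE eqxx ?orbT)).
have [g7 g7e g7S] := pull _ _ (HT (map h (e 7)) ltac:(by rewrite !inE eqxx ?orbT)).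
move: Ha; rewrite -M1 => /mapP [a1 a1e Ea].
move: Hb; rewrite -M2 => /mapP [a2 a2e Eb].
move: Hc; rewrite -M3 => /mapP [b1 b1e Ec].
move: Hd; rewrite -M4 => /mapP [b2 b2e Ed].
rewrite -sub1 in Ea; last exact: eA1.
rewrite -sub2 in Eb; last exact: eA2.
rewrite -sub3 in Ec; last exact: eA3.
rewrite -(proj2 (sub4 _ (eA4 _ b2e))) in Ed.
subst a b c d.
have ne : forall x y, h x != h y -> x != y by move=> x y; apply: contraNneq => ->.
have ng : forall g, h g \notin [:: h a1; h a2; h b1; h b2] ->
   [/\ g != a1, g != a2, g != b1 & g != b2].
  move=> g; rewrite !inE !negb_or => /and4P[? ? ? ?]; split; exact: ne.
have {ac ad bc bd} [ac ad bc bd] := And4 (ne _ _ ac) (ne _ _ ad) (ne _ _ bc) (ne _ _ bd).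
have [g4a1 g4a2 g4b1 g4b2] := ng _ g4S.
have [g5a1 g5a2 g5b1 g5b2] := ng _ g5S.
have [g6a1 g6a2 g6b1 g6b2] := ng _ g6S.
have [g7a1 g7a2 g7b1 g7b2] := ng _ g7S.
exists [ffun v : 'I_8 => nth x0 [:: a1; a2; b1; b2; g4; g5; g6; g7] v].
split.
  move=> v; rewrite ffunE; have -> : L v = L (inord v) by rewrite inord_val.
  by case: v => [[|[|[|[|[|[|[|[|//]]]]]]]] Hv] /=; apply: eL.
move=> u v; rewrite !ffunE.
case: u => [[|[|[|[|[|[|[|[|//]]]]]]]] Hu]; case: v => [[|[|[|[|[|[|[|[|//]]]]]]]] Hv];
  rewrite /K224 /part224 //= => _; apply/eqP; rewrite // eq_sym //.
Qed.

From mathcomp Require Import zify.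

Definition v0 : 'I_8 := Ordinal (isT : 0 < 8).
Definition v2 : 'I_8 := Ordinal (isT : 2 < 8).
Definition v4 : 'I_8 := Ordinal (isT : 4 < 8).

Lemma part_lt (v : 'I_8) : part224 v < 3.
Proof. by rewrite /part224; case: ifP => //; case: ifP. Qed.
Definition col3 : {ffun 'I_8 -> 'I_3} := [ffun v => Ordinal (part_lt v)].

Lemma colorable3 : colorable K224 3.
Proof.
exists col3.
move=> u v; rewrite /K224 !ffunE => H /(congr1 val) /= E.
by rewrite E eqxx in H.
Qed.

Lemma not_colorable j : j < 3 -> ~ colorable K224 j.
Proof.
move=> Hj [f Hf].
have d : forall u v : 'I_8, K224 u v -> (f u : nat) <> f v.
  by move=> u v Huv E; apply: (Hf u v Huv); apply: val_inj.
have d1 := d v0 v2 isT.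
have d2 := d v0 v4 isT.
have d3 := d v2 v4 isT.
have l1 := ltn_ord (f v0); have l2 := ltn_ord (f v2); have l3 := ltn_ord (f v4).
lia.
Qed.

Lemma chrom3 : is_chromatic_number K224 3.
Proof. by split; [exact: colorable3 | exact: not_colorable]. Qed.

Lemma not_choosable j : j < 3 -> ~ choosable K224 j.
Proof.
move=> Hj Hc; apply: (not_colorable Hj).
have [|f [_ Hf]] := Hc j (fun _ => [set: 'I_j]).
  by move=> v; rewrite cardsT card_ord.
by exists f.
Qed.

Definition perms3 : seq (seq nat) :=
  [:: [:: 0; 1; 2]; [:: 0; 2; 1]; [:: 1; 0; 2]; [:: 1; 2; 0]; [:: 2; 0; 1]; [:: 2; 1; 0]].
Definition gcol (p : seq nat) : {ffun 'I_8 -> 'I_3} :=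
  [ffun v => Ordinal (ltn_pmod (nth 0 p (part224 v)) (isT : 0 < 3))].
Definition six := map gcol perms3.

Lemma perms3_ok : all (fun p => all (fun i => all (fun j => (i == j) || (nth 0 p i %% 3 != nth 0 p j %% 3)) (iota 0 3)) (iota 0 3)) perms3.
Proof. by []. Qed.


Lemma chrom_ge6 : 6 <= chrom_poly K224 3.
Proof.
have U : uniq six.
  rewrite -(map_inj_uniq (f := fun f : {ffun 'I_8 -> 'I_3} => f)) //.
  apply: (@map_uniq _ _ (fun f : {ffun 'I_8 -> 'I_3} => [:: val (f v0); val (f v2); val (f v4)])).
  rewrite map_id /six -map_comp.
  have -> : [seq ((fun f : {ffun 'I_8 -> 'I_3} => [:: val (f v0); val (f v2); val (f v4)]) \o gcol) i | i <- perms3]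
     = [seq [:: nth 0 p 0 %% 3; nth 0 p 1 %% 3; nth 0 p 2 %% 3] | p <- perms3].
    by apply: eq_map => p /=; rewrite !ffunE.
  by [].
rewrite /chrom_poly; apply: (@leq_trans #|six|); first by rewrite (card_uniqP U).
apply: subset_leq_card; apply/subsetP => f /mapP [p pin ->]; rewrite inE.
apply/forallP => u; apply/forallP => v; apply/implyP; rewrite /K224 !ffunE => H.
apply/eqP => /(congr1 val) /= E; move: H; apply/negP; rewrite negbK.
have pm : forall w : 'I_8, part224 w \in iota 0 3 by move=> w; rewrite mem_iota add0n part_lt.
have H1 : all (fun i => all (fun j => (i == j) || (nth 0 p i %% 3 != nth 0 p j %% 3)) (iota 0 3)) (iota 0 3).
  by move/allP: perms3_ok; apply.
move/allP: H1 => /(_ _ (pm u)) /allP /(_ _ (pm v)).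
by rewrite E eqxx orbF.
Qed.

Definition LL : seq (seq nat) :=
  [:: [:: 0; 4; 5]; [:: 1; 2; 4]; [:: 2; 4; 5]; [:: 0; 1; 4];
      [:: 0; 1; 4]; [:: 1; 4; 5]; [:: 0; 2; 4]; [:: 2; 4; 5]].
Definition L0 (v : 'I_8) : {set 'I_6} := [set x : 'I_6 | val x \in nth [::] LL v].

Lemma card_valset n (l : seq nat) : #|[set x : 'I_n | val x \in l]| = count (mem l) (iota 0 n).
Proof.
rewrite cardsE cardE -deprecated_filter_index_enum size_filter [index_enum _]unlock.
by rewrite -val_enum_ord count_map enumT.
Qed.

Lemma L0_size : list_of_size L0 3.
Proof.
move=> v; rewrite /L0 card_valset.
by case: v => [[|[|[|[|[|[|[|[|//]]]]]]]] Hv].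
Qed.

Fixpoint prodl (ls : seq (seq nat)) : seq (seq nat) :=
  match ls with
  | [::] => [:: [::]]
  | l :: ls' => flatten (map (fun x => map (cons x) (prodl ls')) l)
  end.

Lemma prodl_mem ls t : size t = size ls ->
  (forall i, i < size ls -> nth 0 t i \in nth [::] ls i) -> t \in prodl ls.
Proof.
elim: ls t => [|l ls IH] [|x t] //=.
case=> st H; apply/flatten_mapP; exists x; first exact: (H 0).
apply: map_f; apply: IH => // i Hi; exact: (H i.+1).
Qed.

Definition partn (i : nat) := if i < 2 then 0 else if i < 4 then 1 else 2.
Definition okc (t : seq nat) :=
  all (fun i => all (fun j => (partn i == partn j) || (nth 0 t i != nth 0 t j)) (iota 0 8)) (iota 0 8).
Definition solcodes : seq (seq nat) :=
  [:: [:: 0; 2; 5; 1; 4; 4; 4; 4]; [:: 4; 4; 2; 1; 0; 5; 0; 5];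
      [:: 4; 4; 5; 0; 1; 1; 2; 2]; [:: 5; 1; 2; 0; 4; 4; 4; 4]].

Lemma refl_check : all (fun t => ~~ okc t || (t \in solcodes)) (prodl LL).
Proof. vm_compute. reflexivity. Qed.

Definition decode (t : seq nat) : {ffun 'I_8 -> 'I_6} :=
  [ffun v : 'I_8 => Ordinal (ltn_pmod (nth 0 t (nat_of_ord v)) (isT : 0 < 6))].

Lemma PL_le4 : PL K224 L0 <= 4.
Proof.
rewrite /PL; apply: (@leq_trans #|map decode solcodes|); last exact: (card_size _).
apply: subset_leq_card; apply/subsetP => f; rewrite inE => /andP[/forallP Hl /forallP Hp].
set t := [seq val (f (inord i)) | i <- iota 0 8].
have tin : t \in prodl LL.
  apply: prodl_mem; first by rewrite size_map size_iota.
  move=> i Hi; rewrite (nth_map 0) ?size_iota // nth_iota // add0n.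
  by have := Hl (inord i); rewrite inE inordK.
have tok : okc t.
  apply/allP => i; rewrite mem_iota add0n => Hi; apply/allP => j; rewrite mem_iota add0n => Hj.
  case: (boolP (partn i == partn j)) => //= hne.
  rewrite !(nth_map 0) ?size_iota // !nth_iota // !add0n.
  have K : K224 (inord i) (inord j) by rewrite /K224 /part224 !inordK.
  have := Hp (inord i) => /forallP /(_ (inord j)) /implyP /(_ K).
  by apply: contraNneq => E; apply/eqP/val_inj.
have ts : t \in solcodes by have := allP refl_check t tin; rewrite tok.
suff -> : f = decode t by apply: map_f.
apply/ffunP => v; rewrite ffunE; apply: val_inj => /=.
rewrite (nth_map 0) ?size_iota // nth_iota // add0n inord_val modn_small //; exact: ltn_ord.
Qed.

Theorem proposition29 :
  chromatic_choosable K224 /\ ~ weakly_enum_chromatic_choosable K224.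
Proof.
split.
  exists 3; split; first exact: chrom3.
  by split; [exact: choosable3 | exact: not_choosable].
move=> H; have [_ Hmin] := H 3 chrom3.
have := Hmin 6 L0 L0_size; have := chrom_ge6; have := PL_le4; lia.
Qed.
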